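(* Let $\mathcal C$ and $\mathcal D$ be $\Bbbk$-linear categories, let $F:\mathcal C\to\mathcal D$ be a fully faithful ($\Bbbk$-linear) functor, and let $\sigma_{\mathcal C}$ and $\sigma_{\mathcal D}$ be ($\Bbbk$-linear) endofunctors of $\mathcal C$ and $\mathcal D$ respectively. Suppose that $F\circ\sigma_{\mathcal C}$ is naturally isomorphic to $\sigma_{\mathcal D}\circ F$. Then $\mathrm{FP}(u,t,\sigma_{\mathcal C})\le \mathrm{FP}(u,t,\sigma_{\mathcal D})$ coefficientwise, i.e. $\mathrm{fpdim}^n(\sigma_{\mathcal C}^m)\le \mathrm{fpdim}^n(\sigma_{\mathcal D}^m)$ for all $n\ge 1$ and $m\ge 0$.
   Context: $\Bbbk$ is an algebraically closed field. For objects $X,Y$ write $\dim(X,Y)=\dim_\Bbbk\mathrm{Hom}(X,Y)\in\mathbb{Z}_{\ge0}\cup\{\infty\}$. Spectral radius: for a square matrix $A$ with entries in $\mathbb R\cup\{\pm\infty\}$, let $A'$ be obtained by replacing each entry $\infty$ (resp. $-\infty$) in position $(i,j)$ by a real variable $x_{ij}$ (resp. $-x_{ij}$), and set $\rho(A)=\liminf_{\text{all }x_{ij}\to\infty}\rho(A')$, where for a real matrix $\rho$ is the maximum of the absolute values of its eigenvalues. A brick is an object $M$ with $\mathrm{Hom}(M,M)=\Bbbk$. A brick set of size $n$ is a set $\phi=\{X_1,\dots,X_n\}$ of nonzero bricks with $\dim(X_i,X_j)=\delta_{ij}$ for all $i,j$; $\Phi_{n,b}$ denotes the set of brick sets of size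 $n$. For an endofunctor $\sigma$, the adjacency matrix is $A(\phi,\sigma)=(\dim(X_i,\sigma(X_j)))_{n\times n}$, and $\mathrm{fpdim}^n(\sigma)=\sup_{\phi\in\Phi_{n,b}}\rho(A(\phi,\sigma))$ (defined as $0$ if $\Phi_{n,b}=\emptyset$). The Frobenius–Perron series is $\mathrm{FP}(u,t,\sigma)=\sum_{m\ge0}\sum_{n\ge1}\mathrm{fpdim}^n(\sigma^m)t^mu^n$, and for two such series $f\le g$ means every coefficient of $f$ is at most the corresponding coefficient of $g$ (coefficients in $\mathbb R_{\ge0}\cup\{\infty\}$). *)

(* Defs.v *)
From HB Require Import structures.
From mathcomp Require Import all_boot all_order all_algebra.
From mathcomp Require Import all_classical all_reals.
From mathcomp Require Import ereal.
From mathcomp Require Import complex.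

Set Implicit Arguments.
Unset Strict Implicit.
Unset Printing Implicit Defensive.

Import Order.TTheory GRing.Theory Num.Theory.
Local Open Scope ring_scope.
Local Open Scope classical_set_scope.

Record kcat (K : fieldType) := KCat {
  obj : Type;
  hom : obj -> obj -> lmodType K;
  comp : forall X Y Z : obj, hom Y Z -> hom X Y -> hom X Z;
  idm : forall X : obj, hom X X;
  comp_linr : forall X Y Z (g : hom Y Z) (a : K) (f1 f2 : hom X Y),
      comp g (a *: f1 + f2) = a *: comp g f1 + comp g f2;
  comp_linl : forall X Y Z (f : hom X Y) (a : K) (g1 g2 : hom Y Z),
      comp (a *: g1 + g2) f = a *: comp g1 f + comp g2 f;
  compA : forall X Y Z W (h : hom Z W) (g : hom Y Z) (f : hom X Y),
      comp h (comp g f) = comp (comp h g) f;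
  comp_idl : forall X Y (f : hom X Y), comp (idm Y) f = f;
  comp_idr : forall X Y (f : hom X Y), comp f (idm X) = f
}.

Arguments comp {K} _ {X Y Z}.
Arguments idm {K} _ X.

Record kfunctor (K : fieldType) (C D : kcat K) := KFunctor {
  fobj : obj C -> obj D;
  fmap : forall X Y : obj C, hom X Y -> hom (fobj X) (fobj Y);
  fmap_lin : forall X Y (a : K) (f g : hom X Y),
      fmap (a *: f + g) = a *: fmap f + fmap g;
  fmap_comp : forall X Y Z (g : hom Y Z) (f : hom X Y),
      fmap (comp C g f) = comp D (fmap g) (fmap f);
  fmap_id : forall X, fmap (idm C X) = idm D (fobj X)
}.

Arguments fobj {K C D} _ _.
Arguments fmap {K C D} _ {X Y}.

Definition fully_faithful (K : fieldType) (C D : kcat K) (F : kfunctor C D) :=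
  forall X Y : obj C, bijective (@fmap _ _ _ F X Y).

Definition nat_iso_commute (K : fieldType) (C D : kcat K) (F : kfunctor C D)
    (sC : kfunctor C C) (sD : kfunctor D D) :=
  exists eta : forall X : obj C, hom (fobj F (fobj sC X)) (fobj sD (fobj F X)),
    (forall (X Y : obj C) (f : hom X Y),
        comp D (eta Y) (fmap F (fmap sC f)) = comp D (fmap sD (fmap F f)) (eta X))
    /\ (forall X : obj C, exists theta : hom (fobj sD (fobj F X)) (fobj F (fobj sC X)),
          comp D theta (eta X) = idm D _ /\ comp D (eta X) theta = idm D _).

Definition fpow_obj (K : fieldType) (C : kcat K) (s : kfunctor C C) (m : nat)
  : obj C -> obj C := iter m (fobj s).

Definition lin_indep (K : fieldType) (V : lmodType K) (s : seq V) :=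
  forall c : 'I_(size s) -> K,
    \sum_(i < size s) c i *: s`_i = 0 -> forall i, c i = 0.

Definition vdim (R : realType) (K : fieldType) (V : lmodType K) : \bar R :=
  ereal_sup [set ((size s)%:R)%:E | s in [set s : seq V | lin_indep s]].

Definition hdim (R : realType) (K : fieldType) (C : kcat K) (X Y : obj C)
  : \bar R := vdim R (hom X Y).

Definition spec_rad (R : realType) (n : nat) (A : 'M[R]_n) : \bar R :=
  ereal_sup [set (ComplexField.Normc.normc z)%:E |
     z in [set z : R[i] | root (char_poly (map_mx (fun r : R => (r%:C)%C) A)) z]].

Definition subst_inf (R : realType) (n : nat) (A : 'M[\bar R]_n)
    (x : 'I_n -> 'I_n -> R) : 'M[R]_n :=
  \matrix_(i, j) match A i j with
                 | EFin r => r
                 | +oo%E => x i j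
                 | -oo%E => - x i j
                 end.

(* liminf as all the variables x_ij tend to +oo *)
Definition spec_rad_ext (R : realType) (n : nat) (A : 'M[\bar R]_n) : \bar R :=
  ereal_sup [set ereal_inf [set spec_rad (subst_inf A x) |
                            x in [set x | forall i j, M <= x i j]] | M in [set: R]].

Definition brick_set (R : realType) (K : fieldType) (C : kcat K) (n : nat)
    (X : 'I_n -> obj C) :=
  forall i j, hdim R (X i) (X j) = (if i == j then 1 else 0)%:R%:E.

Definition adj_mx (R : realType) (K : fieldType) (C : kcat K) (n : nat)
    (X : 'I_n -> obj C) (s : obj C -> obj C) : 'M[\bar R]_n :=
  \matrix_(i, j) hdim R (X i) (s (X j)).

(* fpdim^n of an endofunctor, given through its object map s *)
Definition fpdim (R : realType) (K : fieldType) (C : kcat K) (n : nat)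
    (s : obj C -> obj C) : \bar R :=
  if `[< exists X : 'I_n -> obj C, brick_set R X >]
  then ereal_sup [set spec_rad_ext (adj_mx R X s) | X in [set X : 'I_n -> obj C | brick_set R X]]
  else 0%E.

(* Main.v *)
Require Import Defs.
From HB Require Import structures.
From mathcomp Require Import all_boot all_order all_algebra.
From mathcomp Require Import all_classical all_reals.
From mathcomp Require Import ereal complex.
Require Import Defs.

Set Implicit Arguments.
Unset Strict Implicit.
Unset Printing Implicit Defensive.
Import Order.TTheory GRing.Theory Num.Theory.
Local Open Scope ring_scope.
Local Open Scope classical_set_scope.

Section Helpers.
Variables (R : realType) (K : fieldType).

Lemma lin_indepP (V : lmodType K) (s : seq V) : lin_indep s <->
  (forall c : nat -> K, \sum_(i < size s) c i *: s`_i = 0 ->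
     forall i, (i < size s)%N -> c i = 0).
Proof.
split.
  move=> h c hc i hi; exact: (h (fun j => c (val j)) hc (Ordinal hi)).
move=> h c hc i.
pose c' n := oapp c 0 (insub n : option 'I_(size s)).
have e j : c' (val j) = c j by rewrite /c' valK.
rewrite -e; apply: h (ltn_ord i).
rewrite -[RHS]hc; apply: eq_bigr => j _; by rewrite e.
Qed.

Lemma vdim_le (V W : lmodType K) (f : V -> W) :
  (forall a x y, f (a *: x + y) = a *: f x + f y) -> injective f ->
  (vdim R V <= vdim R W)%E.
Proof.
move=> hf finj.
have f0 : f 0 = 0.
  by have := hf (-1) 0 0; rewrite scaler0 addr0 scaleN1r addNr.
have fD : forall x y, f (x + y) = f x + f y.
  by move=> x y; rewrite -[x]scale1r hf !scale1r.
have fZ a x : f (a *: x) = a *: f x by rewrite -[a *: x]addr0 hf f0 addr0.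
apply: ge_ereal_sup => _ [s /lin_indepP hs <-].
apply: ereal_sup_ubound; exists (map f s); last by rewrite size_map.
apply/lin_indepP; rewrite size_map => c hc i hi.
apply: hs hi; apply: finj; rewrite f0 -hc (big_morph f fD f0).
by apply: eq_bigr => j _; rewrite fZ (nth_map 0).
Qed.

Definition kiso (D : kcat K) (P Q : obj D) :=
  exists (u : hom P Q) (v : hom Q P), comp D v u = idm D P /\ comp D u v = idm D Q.

Lemma hdim_iso (D : kcat K) (A P Q : obj D) : kiso P Q -> hdim R A P = hdim R A Q.
Proof.
move=> [u [v [vu uv]]]; rewrite /hdim.
apply/le_anti/andP; split.
  apply: (@vdim_le _ _ (fun g => comp D u g)).
    by move=> a x y; rewrite comp_linr.
  by move=> x y /(congr1 (comp D v)); rewrite !compA vu !comp_idl.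
apply: (@vdim_le _ _ (fun g => comp D v g)).
  by move=> a x y; rewrite comp_linr.
by move=> x y /(congr1 (comp D u)); rewrite !compA uv !comp_idl.
Qed.

Lemma iso_refl (D : kcat K) (P : obj D) : kiso P P.
Proof. by exists (idm D P), (idm D P); rewrite comp_idl. Qed.

Lemma iso_trans (D : kcat K) (P Q S : obj D) : kiso P Q -> kiso Q S -> kiso P S.
Proof.
move=> [u [v [vu uv]]] [u' [v' [vu' uv']]].
exists (comp D u' u), (comp D v v'); split.
  by rewrite compA -(compA v) vu' comp_idr.
by rewrite compA -(compA u') uv comp_idr.
Qed.

Lemma iso_fmap (D E : kcat K) (G : kfunctor D E) (P Q : obj D) :
  kiso P Q -> kiso (fobj G P) (fobj G Q).
Proof.
move=> [u [v [vu uv]]]; exists (fmap G u), (fmap G v).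
by rewrite -!fmap_comp vu uv !fmap_id.
Qed.

Lemma iso_fpow (C D : kcat K) (F : kfunctor C D) (sC : kfunctor C C)
  (sD : kfunctor D D) : nat_iso_commute F sC sD ->
  forall m X, kiso (fobj F (fpow_obj sC m X)) (fpow_obj sD m (fobj F X)).
Proof.
move=> [eta [_ heta]]; elim=> [|m IH] X; first exact: iso_refl.
rewrite /fpow_obj !iterS.
apply: iso_trans (iso_fmap sD (IH X)).
have [th [h1 h2]] := heta (iter m (fobj sC) X).
by exists (eta _), th.
Qed.

Lemma hdim_ff (C D : kcat K) (F : kfunctor C D) : fully_faithful F ->
  forall X Y : obj C, hdim R (fobj F X) (fobj F Y) = hdim R X Y.
Proof.
move=> hff X Y; rewrite /hdim; case: (hff X Y) => g fg gf.
apply/le_anti/andP; split.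
  apply: (@vdim_le _ _ g); last exact: can_inj gf.
  move=> a x y; apply: (can_inj fg).
  by rewrite gf fmap_lin !gf.
apply: (@vdim_le _ _ (fmap F)); last exact: can_inj fg.
by move=> a x y; rewrite fmap_lin.
Qed.

Lemma spec_rad_ge0 (n : nat) (A : 'M[R]_n) : (0 < n)%N -> (0 <= spec_rad A)%E.
Proof.
move=> hn; rewrite /spec_rad.
have : size (char_poly (map_mx (fun r : R => (r%:C)%C) A)) != 1%N.
  by rewrite size_char_poly; case: n hn {A}.
move=> /closed_rootP [z hz].
apply: le_trans (ereal_sup_ubound _); last by exists z.
rewrite lee_fin; case: z {hz} => a b /=; exact: sqrtr_ge0.
Qed.

Lemma spec_rad_ext_ge0 (n : nat) (A : 'M[\bar R]_n) : (0 < n)%N ->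
  (0 <= spec_rad_ext A)%E.
Proof.
move=> hn; rewrite /spec_rad_ext.
apply: le_trans (ereal_sup_ubound _); last by exists 0.
apply: le_ereal_inf_tmp => _ [x _ <-]; exact: spec_rad_ge0.
Qed.

End Helpers.

Theorem theorem0p1 (R : realType) (K : closedFieldType) (C D : kcat K)
    (F : kfunctor C D) (sC : kfunctor C C) (sD : kfunctor D D) :
  fully_faithful F ->
  nat_iso_commute F sC sD ->
  forall n m : nat, (1 <= n)%N ->
    (fpdim R n (fpow_obj sC m) <= fpdim R n (fpow_obj sD m))%E.
Proof.
move=> hff hnat n m hn.
have key : forall X : 'I_n -> obj C,
    adj_mx R X (fpow_obj sC m) = adj_mx R (fun i => fobj F (X i)) (fpow_obj sD m).
  move=> X; apply/matrixP => i j; rewrite !mxE.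
  by rewrite -(hdim_ff R hff) (hdim_iso R _ (iso_fpow hnat m (X j))).
have brF : forall X : 'I_n -> obj C, brick_set R X ->
    brick_set R (fun i => fobj F (X i)).
  by move=> X hX i j; rewrite (hdim_ff R hff) hX.
rewrite /fpdim.
case: (asboolP (exists X : 'I_n -> obj C, brick_set R X)) => [[X0 hX0]|nC].
  have -> : `[< exists X : 'I_n -> obj D, brick_set R X >] = true.
    by apply/asboolP; exists (fun i => fobj F (X0 i)); exact: brF.
  apply: ge_ereal_sup => _ [X hX <-].
  apply: ereal_sup_ubound; exists (fun i => fobj F (X i)); first exact: brF.
  by rewrite key.
case: (asboolP (exists X : 'I_n -> obj D, brick_set R X)) => [[Y hY]|//].
apply: le_trans (ereal_sup_ubound _); last by exists Y.
exact: spec_rad_ext_ge0.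
Qed.
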